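(* If $G$ is a finite simple chordless graph with $\Delta(G)\ge 3$, then any two proper $(\Delta(G)+1)$-edge-colorings of $G$ are $K$-equivalent.
   Context: A (proper) $t$-coloring of a graph $G$ is a map $\alpha:E(G)\to\{1,\dots,t\}$ such that adjacent edges receive different colors. For distinct colors $c,d$, $K_\alpha(c,d)$ denotes the subgraph of $G$ formed by the edges colored $c$ or $d$. A Kempe chain is a connected component of some $K_\alpha(c,d)$; a $K$-change consists of choosing a Kempe chain and swapping the two colors on its edges. Two $t$-colorings are $K$-equivalent if one can be obtained from the other by a finite sequence of $K$-changes, all using colors from $\{1,\dots,t\}$. A graph is chordless if no cycle $C$ of $G$ has a chord, i.e. an edge of $G$ joining two non-consecutive vertices of $C$. $\Delta(G)$ is the maximum degree. *)

(* Defs.v *)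
From Stdlib Require Import Relation_Operators.
From mathcomp Require Import all_boot.
Set Implicit Arguments. Unset Strict Implicit. Unset Printing Implicit Defensive.

Definition simple_graph (T : finType) (e : rel T) : Prop :=
  symmetric e /\ irreflexive e.

Definition edges (T : finType) (e : rel T) : {set {set T}} :=
  [set A : {set T} | [exists x, exists y, e x y && (A == [set x; y])]].

Definition maxdeg (T : finType) (e : rel T) : nat :=
  \max_(v : T) #|[set u | e v u]|.

(* chordless: no cycle (>= 3 distinct vertices, cyclically adjacent) has a
   chord, i.e. an edge joining two non-consecutive vertices of the cycle *)
Definition chordless (T : finType) (e : rel T) : Prop :=
  forall s : seq T, uniq s -> 3 <= size s -> cycle e s ->
  forall x y, x \in s -> y \in s -> e x y ->
    (y == next s x) || (x == next s y).

(* Edge colorings are maps from vertex pairs to colors (values on non-edges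
   are irrelevant). *)
Definition proper_coloring (T : finType) (e : rel T) (t : nat)
    (a : {set T} -> nat) : Prop :=
  (forall A, A \in edges e -> 1 <= a A <= t) /\
  (forall A B, A \in edges e -> B \in edges e -> A != B ->
     A :&: B != set0 -> a A != a B).

Definition Kedges (T : finType) (e : rel T) (a : {set T} -> nat) (c d : nat)
    : {set {set T}} :=
  [set A in edges e | (a A == c) || (a A == d)].

Definition Kadj (T : finType) (e : rel T) (a : {set T} -> nat) (c d : nat)
    : rel {set T} :=
  fun A B => [&& A \in Kedges e a c d, B \in Kedges e a c d & A :&: B != set0].

Definition kempe_chain (T : finType) (e : rel T) (a : {set T} -> nat)
    (c d : nat) (A0 : {set T}) : {set {set T}} :=
  [set B | connect (Kadj e a c d) A0 B].

(* b is obtained from a by one K-change with colors in {1..t}.  (Chains that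
   are isolated vertices have no edges; swapping them is the identity.) *)
Definition Kchange (T : finType) (e : rel T) (t : nat)
    (a b : {set T} -> nat) : Prop :=
  exists c d A0,
    [/\ 1 <= c <= t, 1 <= d <= t, c != d, A0 \in Kedges e a c d &
     forall A, A \in edges e ->
       b A = (if A \in kempe_chain e a c d A0 then
                (if a A == c then d else c)
              else a A)].

Definition same_on_edges (T : finType) (e : rel T) (a b : {set T} -> nat)
    : Prop := forall A, A \in edges e -> a A = b A.

Definition K_equivalent (T : finType) (e : rel T) (t : nat)
    (a b : {set T} -> nat) : Prop :=
  exists b', clos_refl_trans _ (Kchange e t) a b' /\ same_on_edges e b' b.

(* Main.v *)
Require Import Defs.
From Stdlib Require Import Relation_Operators.
From mathcomp Require Import all_boot zify.
Set Implicit Arguments. Unset Strict Implicit. Unset Printing Implicit Defensive.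

Definition KedgesG (V : finType) (E : {set V}) (a : V -> nat) (c d : nat) : {set V} :=
  [set A in E | (a A == c) || (a A == d)].
Definition KadjG (V : finType) (r : rel V) (E : {set V}) (a : V -> nat) (c d : nat) : rel V :=
  fun A B => [&& A \in KedgesG E a c d, B \in KedgesG E a c d & r A B].
Definition chainG (V : finType) (r : rel V) (E : {set V}) (a : V -> nat) (c d : nat) (A0 : V) : {set V} :=
  [set B | connect (KadjG r E a c d) A0 B].
Definition kswap (V : finType) (r : rel V) (E : {set V}) (a : V -> nat) (c d : nat) (A0 : V) : V -> nat :=
  fun A => if A \in chainG r E a c d A0 then (if a A == c then d else c) else a A.
Definition KchangeG (V : finType) (r : rel V) (E : {set V}) (t : nat) (a b : V -> nat) : Prop :=
  exists c d A0, [/\ 1 <= c <= t, 1 <= d <= t, c != d, A0 \in KedgesG E a c d &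
     forall A, A \in E -> b A = kswap r E a c d A0 A].
Definition properG (V : finType) (r : rel V) (E : {set V}) (t : nat) (a : V -> nat) : Prop :=
  (forall A, A \in E -> 1 <= a A <= t) /\
  (forall A B, A \in E -> B \in E -> A != B -> r A B -> a A != a B).
Definition sameG (V : finType) (E : {set V}) (a b : V -> nat) : Prop :=
  forall A, A \in E -> a A = b A.
Definition KeqG (V : finType) (r : rel V) (E : {set V}) (t : nat) (a b : V -> nat) : Prop :=
  exists b', clos_refl_trans _ (KchangeG r E t) a b' /\ sameG E b' b.

Lemma conn_closed (V : finType) (e : rel V) (S : pred V) x y :
  (forall A B, S A -> e A B -> S B) -> S x -> connect e x y -> S y.
Proof.
move=> HS Hx /connectP [p pth ->]; elim: p x Hx pth => //= z p IH x Hx /andP[exz pth].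
exact: IH (HS _ _ Hx exz) pth.
Qed.

Lemma chain_sub (V : finType) (r : rel V) E a c d A0 B :
  A0 \in KedgesG E a c d -> B \in chainG r E a c d A0 -> B \in KedgesG E a c d.
Proof.
move=> HA0; rewrite inE => HB.
apply: (conn_closed (S := fun A => A \in KedgesG E a c d)) HA0 HB.
by move=> A B' _ /and3P[].
Qed.

Lemma Kedges_col (V : finType) (E : {set V}) a c d A :
  A \in KedgesG E a c d -> (A \in E) /\ ((a A == c) || (a A == d)).
Proof. by rewrite inE => /andP. Qed.

Lemma Kchange_proper (V : finType) (r : rel V) E t a b :
  symmetric r -> properG r E t a -> KchangeG r E t a b -> properG r E t b.
Proof.
move=> symr [ra pa] [c [d [A0 [hc hd cd HA0 Hb]]]].
have inK A : A \in chainG r E a c d A0 -> A \in KedgesG E a c d by exact: chain_sub.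
have chstep A B : A \in chainG r E a c d A0 -> B \in E -> r A B ->
   (a B == c) || (a B == d) -> B \in chainG r E a c d A0.
  move=> HA BE rAB HB; move: (HA); rewrite !inE => cA.
  apply: connect_trans cA (connect1 _).
  by rewrite /KadjG inK // rAB inE BE HB.
split.
  move=> A AE; rewrite Hb // /kswap; case: ifP => _; [by case: ifP | exact: ra].
move=> A B AE BE AB rAB; rewrite !Hb // /kswap.
have aAB := pa A B AE BE AB rAB.
case: (boolP (A \in chainG r E a c d A0)) => HA; case: (boolP (B \in chainG r E a c d A0)) => HB.
- have [_ /orP[/eqP eA|/eqP eA]] := Kedges_col (inK _ HA);
  have [_ /orP[/eqP eB|/eqP eB]] := Kedges_col (inK _ HB);
  move: aAB; rewrite eA eB ?eqxx // => _; rewrite ?(eq_sym d c) ?(negbTE cd) //; by rewrite eq_sym.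
- have nB : ~~ ((a B == c) || (a B == d)).
    by apply/negP => HBc; move: HB; rewrite (chstep A B HA BE rAB HBc).
  move: nB; case: ifP => _; rewrite negb_or => /andP[n1 n2]; by rewrite eq_sym.
- have nA : ~~ ((a A == c) || (a A == d)).
    by apply/negP => HAc; move: HA; rewrite (chstep B A HB AE _ HAc) // symr.
  move: nA; case: ifP => _; rewrite negb_or => /andP[n1 n2] //.
- exact: aAB.
Qed.

Lemma rt_proper (V : finType) (r : rel V) E t a b :
  symmetric r -> clos_refl_trans _ (KchangeG r E t) a b -> properG r E t a -> properG r E t b.
Proof.
move=> symr; elim => //.
- by move=> x y H Hx; apply: Kchange_proper symr Hx H.
- by move=> x y z _ H1 _ H2 /H1 /H2.
Qed.

Lemma KedgesEG (V : finType) (E : {set V}) x del gam c d A :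
  sameG (E :\ x) del gam -> A != x ->
  (A \in KedgesG E del c d) = (A \in KedgesG (E :\ x) gam c d).
Proof.
move=> sg Ax; rewrite !inE Ax /=; case AE: (A \in E) => //=.
by rewrite sg // !inE Ax AE.
Qed.

Lemma KadjEG (V : finType) (r : rel V) (E : {set V}) x del gam c d A B :
  sameG (E :\ x) del gam -> A != x -> B != x ->
  KadjG r E del c d A B = KadjG r (E :\ x) gam c d A B.
Proof.
by move=> sg Ax Bx; rewrite /KadjG (KedgesEG c d sg Ax) (KedgesEG c d sg Bx).
Qed.

Lemma Kedges_neq (V : finType) (E : {set V}) x gam c d A :
  A \in KedgesG (E :\ x) gam c d -> A != x.
Proof. by rewrite !inE => /andP[/andP[]]. Qed.

Lemma KadjG_sub (V : finType) (r : rel V) (E : {set V}) x del gam c d :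
  sameG (E :\ x) del gam ->
  subrel (KadjG r (E :\ x) gam c d) (connect (KadjG r E del c d)).
Proof.
move=> sg A B H; apply: connect1; move: (H) => /and3P[HA HB _].
by rewrite (KadjEG r c d sg (Kedges_neq HA) (Kedges_neq HB)).
Qed.

Lemma L1 (V : finType) (r : rel V) (E : {set V}) x del gam c d A0 :
  sameG (E :\ x) del gam -> A0 \in KedgesG (E :\ x) gam c d ->
  (forall B, B \in chainG r (E :\ x) gam c d A0 -> ~~ KadjG r E del c d B x) ->
  A0 \in KedgesG E del c d /\
  sameG (E :\ x) (kswap r E del c d A0) (kswap r (E :\ x) gam c d A0).
Proof.
move=> sg HA0 Hn.
have A0x := Kedges_neq HA0.
have HA0' : A0 \in KedgesG E del c d by rewrite (KedgesEG c d sg A0x).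
split => // A AG.
have Ax : A != x by move: AG; rewrite !inE => /andP[->].
have eqch : (A \in chainG r E del c d A0) = (A \in chainG r (E :\ x) gam c d A0).
  rewrite !inE; apply/idP/idP => H.
  - suff : A \in chainG r (E :\ x) gam c d A0 by rewrite inE.
    apply: (conn_closed (S := fun B => B \in chainG r (E :\ x) gam c d A0)) H; last by rewrite inE connect0.
    move=> B C HB HBC.
    have Bx := Kedges_neq (chain_sub HA0 HB).
    have Cx : C != x.
      by apply/negP => /eqP Cx; subst C; move: (Hn B HB); rewrite HBC.
    rewrite (KadjEG r c d sg Bx Cx) in HBC.
    move: HB; rewrite !inE => HB; exact: connect_trans HB (connect1 HBC).
  - exact: (connect_sub (KadjG_sub sg) H).
by rewrite /kswap eqch sg.
Qed.

Lemma L2 (V : finType) (r : rel V) (E : {set V}) x del gam c d A0 Bd :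
  symmetric r -> x \in E -> del x = c ->
  sameG (E :\ x) del gam -> A0 \in KedgesG (E :\ x) gam c d ->
  Bd \in chainG r (E :\ x) gam c d A0 -> r x Bd ->
  (forall B, KadjG r E del c d x B -> B = x \/ B = Bd) ->
  x \in KedgesG E del c d /\
  sameG (E :\ x) (kswap r E del c d x) (kswap r (E :\ x) gam c d A0).
Proof.
move=> symr xE dx sg HA0 HBd rxB Hnb.
have xK : x \in KedgesG E del c d by rewrite inE xE dx eqxx.
split => // A AG.
have Ax : A != x by move: AG; rewrite !inE => /andP[->].
have BdK := chain_sub HA0 HBd.
have Bdx := Kedges_neq BdK.
have symG : connect_sym (KadjG r (E :\ x) gam c d).
  apply: sym_connect_sym => B C; rewrite /KadjG symr.
  by case: (B \in _); case: (C \in _).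
have eqch : (A \in chainG r E del c d x) = (A \in chainG r (E :\ x) gam c d A0).
  rewrite !inE; apply/idP/idP => H.
  - suff : (A == x) || (A \in chainG r (E :\ x) gam c d A0) by rewrite (negbTE Ax) inE.
    apply: (conn_closed (S := fun B => (B == x) || (B \in chainG r (E :\ x) gam c d A0))) H; last by rewrite eqxx.
    move=> B C /orP[/eqP->|HB] HBC.
      by case: (Hnb _ HBC) => ->; rewrite /= ?eqxx // HBd orbT.
    case: (eqVneq C x) => [->|Cx]; first by rewrite /=.
    have Bx := Kedges_neq (chain_sub HA0 HB).
    rewrite (KadjEG r c d sg Bx Cx) in HBC.
    move: HB; rewrite !inE => HB; exact: (connect_trans HB (connect1 HBC)).
  - have c1 : connect (KadjG r E del c d) x Bd.
      apply: connect1; rewrite /KadjG xK rxB (KedgesEG c d sg Bdx) BdK //.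
    have c2 : connect (KadjG r E del c d) Bd A0.
      apply: (connect_sub (KadjG_sub sg)); rewrite symG; by move: HBd; rewrite inE.
    apply: connect_trans c1 (connect_trans c2 _).
    exact: (connect_sub (KadjG_sub sg)).
by rewrite /kswap eqch sg.
Qed.

Lemma recolor (V : finType) (r : rel V) (E : {set V}) t (a : V -> nat) x f :
  properG r E t a -> x \in E -> 1 <= f <= t -> f != a x ->
  (forall B, B \in E -> B != x -> r x B -> a B != f) ->
  [/\ KchangeG r E t a (kswap r E a (a x) f x), kswap r E a (a x) f x x = f &
      forall A, A != x -> kswap r E a (a x) f x A = a A].
Proof.
move=> [ra pa] xE hf fx Hfree.
have xK : x \in KedgesG E a (a x) f by rewrite inE xE eqxx.
have chx A : (A \in chainG r E a (a x) f x) = (A == x).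
  rewrite inE; apply/idP/idP => [H|/eqP->]; last exact: connect0.
  apply: (conn_closed (S := fun B => B == x)) H; last exact: eqxx.
  move=> B C /eqP-> /and3P[_ HC rxC]; case: (eqVneq C x) => // Cx.
  have xC : x != C by rewrite eq_sym.
  move: HC; rewrite inE => /andP[CE /orP[/eqP HC|/eqP HC]].
  - by move: (pa x C xE CE xC rxC); rewrite HC eqxx.
  - by move: (Hfree C CE Cx rxC); rewrite HC eqxx.
split.
- exists (a x), f, x; split => //; first exact: ra.
  by rewrite eq_sym.
- by rewrite /kswap chx eqxx eqxx.
- by move=> A Ax; rewrite /kswap chx (negbTE Ax).
Qed.

Lemma Kedges_sym (V : finType) (E : {set V}) a c d :
  KedgesG E a d c = KedgesG E a c d.
Proof. by apply/setP => A; rewrite !inE orbC. Qed.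

Lemma Kadj_sym (V : finType) (r : rel V) (E : {set V}) a c d A B :
  KadjG r E a d c A B = KadjG r E a c d A B.
Proof. by rewrite /KadjG Kedges_sym. Qed.

Lemma chain_sym (V : finType) (r : rel V) (E : {set V}) a c d A0 :
  chainG r E a d c A0 = chainG r E a c d A0.
Proof.
apply/setP => B; rewrite !inE; apply: eq_connect => X Y; exact: Kadj_sym.
Qed.

Lemma kswap_sym (V : finType) (r : rel V) (E : {set V}) a c d A0 :
  c != d -> A0 \in KedgesG E a c d ->
  forall A, kswap r E a d c A0 A = kswap r E a c d A0 A.
Proof.
move=> cd HA0 A; rewrite /kswap chain_sym; case: ifP => // HA.
have [_ /orP[/eqP->|/eqP->]] := Kedges_col (chain_sub HA0 HA).
- by rewrite eqxx (negbTE cd).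
- by rewrite eqxx eq_sym (negbTE cd).
Qed.

Lemma lift_core (V : finType) (r : rel V) (E : {set V}) t x (gam del : V -> nat) c d A0 B :
  symmetric r -> x \in E -> #|[set B in E | (B != x) && r x B]| <= t.-1 ->
  properG r E t del -> sameG (E :\ x) del gam ->
  1 <= c <= t -> 1 <= d <= t -> c != d -> A0 \in KedgesG (E :\ x) gam c d ->
  del x = c -> B \in chainG r (E :\ x) gam c d A0 -> KadjG r E del c d B x ->
  exists del', clos_refl_trans _ (KchangeG r E t) del del' /\
     sameG (E :\ x) del' (kswap r (E :\ x) gam c d A0).
Proof.
move=> symr xE hN pd sg hc hd cd HA0 dx HB HBx.
set N := [set B in E | (B != x) && r x B] in hN *.
have [ra pa] := pd.
have BK := chain_sub HA0 HB.
have Bx := Kedges_neq BK.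
have BE : B \in E by move: BK; rewrite !inE => /andP[/andP[]].
have rxB : r x B by move: HBx => /and3P[_ _]; rewrite symr.
have dB : del B = d.
  move: HBx => /and3P[/Kedges_col[_ /orP[/eqP e1|/eqP e2]] _ _] //.
  have xB : x != B by rewrite eq_sym.
  by move: (pa x B xE BE xB rxB); rewrite dx e1 eqxx.
case: (boolP (has (fun f => (f != c) && (f != d) && [forall B' in N, del B' != f]) (iota 1 t))).
- case/hasP => f; rewrite mem_iota add1n ltnS => hf /andP[/andP[fc fd] /forall_inP ffree].
  have fx : f != del x by rewrite dx.
  have Hfree : forall B', B' \in E -> B' != x -> r x B' -> del B' != f.
    by move=> B' B'E B'x rxB'; apply: ffree; rewrite inE B'E B'x rxB'.
  have [ch1 d1x d1o] := recolor pd xE hf fx Hfree.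
  set del1 := kswap r E del (del x) f x in ch1 d1x d1o.
  have sg1 : sameG (E :\ x) del1 gam.
    move=> A AG; have Ax : A != x by move: AG; rewrite !inE => /andP[->].
    by rewrite d1o // sg.
  have Hn : forall B', B' \in chainG r (E :\ x) gam c d A0 -> ~~ KadjG r E del1 c d B' x.
    move=> B' _; apply/negP => /and3P[_ /Kedges_col[_ H] _]; move: H.
    by rewrite d1x (negbTE fc) (negbTE fd).
  have [HA0' sw] := L1 sg1 HA0 Hn.
  exists (kswap r E del1 c d A0); split; last exact: sw.
  apply: rt_trans (rt_step _ _ _ _ ch1) (rt_step _ _ _ _ _).
  by exists c, d, A0; split.
- move/hasPn => Hnf.
  have Huniq : forall B', KadjG r E del c d x B' -> B' = x \/ B' = B.
    move=> B' /and3P[_ B'K rxB'].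
    case: (eqVneq B' x) => [->|B'x]; [by left | right].
    have [B'E /orP[/eqP e1|/eqP e2]] := Kedges_col B'K.
      have xB' : x != B' by rewrite eq_sym.
      by move: (pa x B' xE B'E xB' rxB'); rewrite dx e1 eqxx.
    have B'N : B' \in N by rewrite inE B'E B'x rxB'.
    apply/eqP; apply/negP => /negP neq.
    pose L := rem c (iota 1 t).
    have Lu : uniq L by apply: rem_uniq; exact: iota_uniq.
    have cI : c \in iota 1 t by rewrite mem_iota add1n ltnS.
    have sL : {subset L <= map del (enum (N :\ B'))}.
      move=> f; rewrite (mem_rem_uniq _ (iota_uniq _ _)) inE => /andP[fc fI].
      case: (eqVneq f d) => [->|fd].
        apply/mapP; exists B; last by rewrite dB.
        by rewrite mem_enum !inE eq_sym neq BE Bx rxB.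
      move: (Hnf f fI); rewrite fc fd /= => /forall_inPn [B'' B''N].
      rewrite negbK => /eqP e''.
      apply/mapP; exists B''; last by rewrite e''.
      rewrite mem_enum !inE; move: B''N; rewrite inE => ->; rewrite andbT.
      by apply/eqP => E''; move: fd; rewrite -e'' E'' e2 eqxx.
    have := uniq_leq_size Lu sL.
    rewrite size_map -cardE size_rem // size_iota.
    move: hN; rewrite (cardsD1 B' N) B'N /=.
    move=> h1 h2; move: h1; rewrite add1n => h1.
    by have := leq_ltn_trans h2 h1; rewrite ltnn.
  have [xK sw] := L2 symr xE dx sg HA0 HB rxB Huniq.
  exists (kswap r E del c d x); split; last exact: sw.
  apply: rt_step; exists c, d, x; split => //.
Qed.

Lemma lift_step (V : finType) (r : rel V) (E : {set V}) t x (gam gam' del : V -> nat) :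
  symmetric r -> x \in E ->
  #|[set B in E | (B != x) && r x B]| <= t.-1 ->
  properG r E t del -> sameG (E :\ x) del gam ->
  KchangeG r (E :\ x) t gam gam' ->
  exists del', clos_refl_trans _ (KchangeG r E t) del del' /\ sameG (E :\ x) del' gam'.
Proof.
move=> symr xE hN pd sg [c [d [A0 [hc hd cd HA0 Hg]]]].
suff [del' [rt sd]] : exists del', clos_refl_trans _ (KchangeG r E t) del del' /\
    sameG (E :\ x) del' (kswap r (E :\ x) gam c d A0).
  by exists del'; split => // A AG; rewrite sd // Hg.
case: (boolP [forall B in chainG r (E :\ x) gam c d A0, ~~ KadjG r E del c d B x]) => Hall.
- have Hn : forall B, B \in chainG r (E :\ x) gam c d A0 -> ~~ KadjG r E del c d B x.
    by move/forall_inP: Hall.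
  have [HA0' sw] := L1 sg HA0 Hn.
  exists (kswap r E del c d A0); split; last exact: sw.
  by apply: rt_step; exists c, d, A0; split.
- move/forall_inPn: Hall => [B HB]; rewrite negbK => HBx.
  have := HBx => /and3P[_ /Kedges_col[_ /orP[/eqP dx|/eqP dx]] _].
  + exact: (lift_core symr xE hN pd sg hc hd cd HA0 dx HB HBx).
  + have HA0s : A0 \in KedgesG (E :\ x) gam d c by rewrite Kedges_sym.
    have HBs : B \in chainG r (E :\ x) gam d c A0 by rewrite chain_sym.
    have HBxs : KadjG r E del d c B x by rewrite Kadj_sym.
    have dc : d != c by rewrite eq_sym.
    have [del' [rt sd]] := lift_core symr xE hN pd sg hd hc dc HA0s dx HBs HBxs.
    exists del'; split => // A AG; rewrite sd //; exact: kswap_sym.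
Qed.

Lemma lift_seq (V : finType) (r : rel V) (E : {set V}) t x :
  symmetric r -> x \in E ->
  #|[set B in E | (B != x) && r x B]| <= t.-1 ->
  forall g g', clos_refl_trans _ (KchangeG r (E :\ x) t) g g' ->
  forall del, properG r E t del -> sameG (E :\ x) del g ->
  exists del', clos_refl_trans _ (KchangeG r E t) del del' /\ sameG (E :\ x) del' g'.
Proof.
move=> symr xE hN g g'; elim.
- move=> y z H del pd sg; exact: lift_step symr xE hN pd sg H.
- by move=> y del _ sg; exists del; split => //; apply: rt_refl.
- move=> y z w _ IH1 _ IH2 del pd sg.
  have [d1 [rt1 s1]] := IH1 del pd sg.
  have pd1 := rt_proper symr rt1 pd.
  have [d2 [rt2 s2]] := IH2 d1 pd1 s1.
  by exists d2; split => //; apply: rt_trans rt1 rt2.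
Qed.

Lemma proper_sub (V : finType) (r : rel V) (E E' : {set V}) t a :
  E' \subset E -> properG r E t a -> properG r E' t a.
Proof.
move=> /subsetP sE [ra pa]; split; first by move=> A /sE; apply: ra.
by move=> A B /sE AE /sE BE; apply: pa.
Qed.

Lemma degenerate_Keq (V : finType) (r : rel V) (E0 : {set V}) t :
  symmetric r ->
  (forall E : {set V}, E \subset E0 -> E != set0 ->
     exists2 x, x \in E & #|[set B in E | (B != x) && r x B]| <= t.-1) ->
  forall E : {set V}, E \subset E0 -> forall a b : V -> nat, properG r E t a -> properG r E t b -> KeqG r E t a b.
Proof.
move=> symr deg E; have [n ltEn] := ubnP #|E|; elim: n E ltEn => // n IH E ltEn sE a b pa pb.
case: (eqVneq E set0) => [Eemp|nE0].
  by exists a; split; [apply: rt_refl | move=> A; rewrite Eemp inE].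
have [x xE hN] := deg E sE nE0.
have sEx : E :\ x \subset E by apply: subsetDl.
have sub : E :\ x \subset E0 by apply: subset_trans sEx sE.
have ltn' : #|E :\ x| < n.
  by move: ltEn; rewrite (cardsD1 x E) xE add1n ltnS.
have [b' [rtG sb']] := IH _ ltn' sub a b (proper_sub sEx pa) (proper_sub sEx pb).
have [d' [rtE sd']] := lift_seq symr xE hN rtG pa (fun _ _ => erefl).
have pd' := rt_proper symr rtE pa.
have sdb : forall A, A \in E :\ x -> d' A = b A by move=> A AG; rewrite sd' // sb'.
case: (eqVneq (d' x) (b x)) => Hx.
  exists d'; split => // A AE; case: (eqVneq A x) => [->|Ax] //.
  by apply: sdb; rewrite !inE Ax AE.
have [ra pbb] := pb.
have hf : 1 <= b x <= t by apply: ra.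
have fx : b x != d' x by rewrite eq_sym.
have Hfree : forall B, B \in E -> B != x -> r x B -> d' B != b x.
  move=> B BE Bx rxB; rewrite sdb; last by rewrite !inE Bx BE.
  have xB : x != B by rewrite eq_sym.
  by rewrite eq_sym; apply: pbb.
have [ch1 d1x d1o] := recolor pd' xE hf fx Hfree.
exists (kswap r E d' (d' x) (b x) x); split.
  by apply: rt_trans rtE (rt_step _ _ _ _ ch1).
move=> A AE; case: (eqVneq A x) => [->|Ax] //.
by rewrite d1o // sdb // !inE Ax AE.
Qed.

Lemma maxpath (T : finType) (g : rel T) : symmetric g -> irreflexive g ->
  forall n x s, #|T| - size (x :: s) <= n -> uniq (x :: s) -> path g x s ->
  exists y t, [/\ uniq (y :: t), path g y t, size s <= size t &
                  forall z, g y z -> z \in t].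
Proof.
move=> symg irrg; elim => [|n IH] x s hn us ps;
  (case: (boolP [forall z, g x z ==> (z \in s)]) => Hall;
  [by exists x, s; split => // z gz; move/forallP: Hall => /(_ z); rewrite gz |
   move/forallPn: Hall => [z]; rewrite negb_imply => /andP[gxz zs]]).
- have zx : z != x by apply/eqP => zx; move: gxz; rewrite zx irrg.
  have uz : uniq (z :: x :: s) by rewrite cons_uniq inE negb_or zx zs us.
  have := card_uniqP uz => /= hc.
  have := max_card (mem (z :: x :: s)); rewrite hc /=.
  by move: hn; rewrite leqn0 subn_eq0 /= => h1 h2; have := leq_trans h2 h1; rewrite ltnn.
- have zx : z != x by apply/eqP => zx; move: gxz; rewrite zx irrg.
  have uz : uniq (z :: x :: s) by rewrite cons_uniq inE negb_or zx zs us.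
  have hn' : #|T| - size (z :: x :: s) <= n.
    by move: hn => /=; lia.
  have pz : path g z (x :: s) by rewrite /= symg gxz ps.
  have [y [t [ut pt st Ht]]] := IH z (x :: s) hn' uz pz.
  by exists y, t; split => //; apply: leq_trans st; rewrite /= leqnSn.
Qed.

Lemma low_deg (T : finType) (g : rel T) : symmetric g -> irreflexive g -> chordless g ->
  forall u w, g u w -> exists y z, g y z /\ #|[set z | g y z]| <= 2.
Proof.
move=> symg irrg chg u w guw.
have uw : u != w by apply/eqP => e; move: guw; rewrite e irrg.
have [y [t [ut pt st Ht]]] : exists y t, [/\ uniq (y :: t), path g y t, size [:: w] <= size t &
                  forall z, g y z -> z \in t].
  apply: (@maxpath T g symg irrg _ u [:: w] (leqnn _)); by rewrite /= ?inE ?uw ?guw.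
have [t1 [t' et]] : exists t1 t', t = t1 :: t' by case: t st {ut pt Ht} => // t1 t' _; exists t1, t'.
have gyt1 : g y t1 by move: pt; rewrite et /= => /andP[].
exists y, t1; split => //.
rewrite leqNgt; apply/negP => H3.
have cnt : 3 <= count (g y) t.
  apply: leq_trans H3 _; rewrite cardE -size_filter; apply: uniq_leq_size; first exact: enum_uniq.
  by move=> z; rewrite mem_enum inE mem_filter => gz; rewrite gz Ht.
have exP : exists n, 3 <= count (g y) (take n t) by exists (size t); rewrite take_size.
case: (ex_minnP exP) => m0 Pm minm.
case: m0 Pm minm => [|m] Pm minm; first by rewrite take0 in Pm.
have msz : m < size t.
  rewrite ltnNge; apply/negP => hm; have := minm m; rewrite take_oversize // => /(_ cnt).
  by rewrite ltnn.
rewrite (take_nth y msz) -cats1 count_cat /= addn0 in Pm.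
have nPm : ~~ (3 <= count (g y) (take m t)) by apply/negP => h; have := minm _ h; rewrite ltnn.
have gyz : g y (nth y t m) by move: Pm nPm; case: (g y (nth y t m)) => //=; rewrite addn0 => ->.
have c2 : 2 <= count (g y) (take m t) by move: Pm; rewrite gyz addn1 ltnS.
case: m minm msz Pm nPm gyz c2 => [|m] minm msz Pm nPm gyz c2; first by rewrite take0 in c2.
subst t; rewrite /= in msz c2 gyz.
rewrite ltnS in msz.
set q := take m t'; set z := nth y t' m.
have [w' wq gyw] : exists2 w', w' \in q & g y w'.
  apply/hasP; rewrite has_count; move: c2; rewrite gyt1 add1n ltnS //.
pose s := y :: rcons (t1 :: q) z.
have us : uniq s.
  have := take_uniq m.+3 ut; rewrite /= (take_nth y msz) //.
have ss : 3 <= size s by rewrite /= size_rcons.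
have cs : cycle g s.
  rewrite /s /= rcons_path last_rcons; apply/and3P; split => //; last by rewrite symg.
  have := pt; rewrite -(cat_take_drop m.+2 (t1 :: t')) cat_path => /andP[h _].
  by move: h; rewrite /= (take_nth y msz) => /andP[].
have ws : w' \in s by rewrite /s inE mem_rcons !inE wq !orbT.
have us' := us.
move: us'; rewrite /s /= => /andP[yn /andP[t1n]].
rewrite rcons_uniq => /andP[zq _].
have wt1 : w' != t1 by apply/eqP => e; move: t1n; rewrite mem_rcons inE -e wq orbT.
have := chg s us ss cs y w' (mem_head _ _) ws gyw.
case/orP => [/eqP e1|/eqP ey].
  by move: e1; rewrite /s /next /= eqxx => e1; move: wt1; rewrite e1 eqxx.
have := prev_next us w'; rewrite -ey /s prev_nth mem_head (memNindex yn) /=.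
rewrite size_rcons /= nth_rcons ltnn eqxx => wz.
by move: zq; rewrite wz wq.
Qed.

Lemma edge_form (T : finType) (e : rel T) A :
  A \in edges e -> exists x y, e x y /\ A = [set x; y].
Proof.
by rewrite inE => /existsP [x /existsP [y /andP [exy /eqP ->]]]; exists x, y.
Qed.

Lemma sub_edge (T : finType) (e : rel T) (E : {set {set T}}) u w :
  simple_graph e -> E \subset edges e -> [set u; w] \in E -> e u w.
Proof.
move=> [syme irre] /subsetP sE /sE /edge_form [x [y [exy Exy]]].
have xy : x != y by apply/eqP => xy; move: exy; rewrite xy irre.
have : x \in [set u; w] by rewrite Exy !inE eqxx.
have : y \in [set u; w] by rewrite Exy !inE eqxx orbT.
move=> /set2P [ey|ey] /set2P [ex|ex]; subst x y; try by rewrite eqxx in xy.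
- by rewrite syme.
- done.
Qed.

Lemma card_EU (T : finType) (e : rel T) (E : {set {set T}}) u :
  E \subset edges e ->
  #|[set B in E | u \in B]| <= #|[set w | [set u; w] \in E]|.
Proof.
move=> sE.
apply: leq_trans (leq_imset_card (fun w => [set u; w]) _).
apply: subset_leq_card; apply/subsetP => B; rewrite inE => /andP [BE uB].
have [p [q [_ Bpq]]] := edge_form ((subsetP sE) _ BE).
move: uB; rewrite Bpq => /set2P [eu|eu]; subst u.
- by apply/imsetP; exists q => //; rewrite inE -Bpq.
- by apply/imsetP; exists p; rewrite ?inE setUC -?Bpq // setUC -Bpq.
Qed.

Lemma deg_bound (T : finType) (e : rel T) (E : {set {set T}}) u :
  simple_graph e -> E \subset edges e ->
  #|[set w | [set u; w] \in E]| <= maxdeg e.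
Proof.
move=> sg sE; apply: leq_trans (leq_bigmax (F := fun v => #|[set u0 | e v u0]|) u).
apply: subset_leq_card; apply/subsetP => w; rewrite !inE => H.
exact: sub_edge sg sE H.
Qed.

Lemma chordless_degenerate (T : finType) (e : rel T) :
  simple_graph e -> chordless e -> 1 <= maxdeg e ->
  forall E : {set {set T}}, E \subset edges e -> E != set0 ->
  exists2 x, x \in E &
    #|[set B in E | (B != x) && (x :&: B != set0)]| <= (maxdeg e).+1.-1.
Proof.
move=> sg chl md E sE nE.
have [syme irre] := sg.
pose g := fun u w => [set u; w] \in E.
have ge : forall u w, g u w -> e u w by move=> u w; apply: sub_edge.
have symg : symmetric g by move=> u w; rewrite /g setUC.
have irrg : irreflexive g by move=> u; apply/negP => /ge; rewrite irre.
have chg : chordless g.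
  move=> s us ss cs x y xs ys gxy; apply: chl => //; last exact: ge.
  exact: sub_cycle ge _ cs.
have [B BE] := set0Pn _ nE.
have [p [q [_ Bpq]]] := edge_form ((subsetP sE) _ BE).
have gpq : g p q by rewrite /g -Bpq.
have [y [z [gyz dy]]] := low_deg symg irrg chg gpq.
exists [set y; z] => //.
set x := [set y; z].
pose EU u := [set B in E | u \in B].
have sN : [set B in E | (B != x) && (x :&: B != set0)] \subset (EU y :\ x) :|: (EU z :\ x).
  apply/subsetP => C; rewrite !inE => /andP [CE /andP [Cx /set0Pn [v]]].
  rewrite !inE => /andP [/orP [/eqP ->|/eqP ->] vC].
  - by rewrite Cx CE vC.
  - by rewrite Cx CE vC orbT.
have xE : x \in E := gyz.
have xEU : forall u, u \in x -> x \in EU u by move=> u ux; rewrite inE xE ux.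
have hy := cardsD1 x (EU y); rewrite xEU ?inE ?eqxx // in hy.
have hz := cardsD1 x (EU z); rewrite xEU ?inE ?eqxx ?orbT // in hz.
have cy : #|EU y| <= 2 := leq_trans (card_EU y sE) dy.
have cz : #|EU z| <= maxdeg e := leq_trans (card_EU z sE) (deg_bound z sg sE).
apply: leq_trans (subset_leq_card sN) _.
rewrite cardsU; apply: leq_trans (leq_subr _ _) _.
move: hy hz cy cz; rewrite !add1n; move: #|EU y :\ x| #|EU z :\ x| #|EU y| #|EU z| (maxdeg e) => p1 p2 q1 q2 M; lia.
Qed.

Theorem corollary1p4 (T : finType) (e : rel T) :
  simple_graph e -> chordless e -> 3 <= maxdeg e ->
  forall a b : {set T} -> nat,
    proper_coloring e (maxdeg e).+1 a ->
    proper_coloring e (maxdeg e).+1 b ->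
    K_equivalent e (maxdeg e).+1 a b.
Proof.
move=> sg chl md a b pa pb.
have symr : symmetric (fun A B : {set T} => A :&: B != set0).
  by move=> A B; rewrite setIC.
have deg := chordless_degenerate sg chl (leq_trans _ md).
have := @degenerate_Keq _ (fun A B : {set T} => A :&: B != set0) (edges e) (maxdeg e).+1 symr (deg isT)
   (edges e) (subxx _) a b pa pb.
move=> [b' [H1 H2]]; exists b'; split; last exact: H2.
exact: H1.
Qed.
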